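(* There is $p_0\in(0,2/3)$ such that for every $p\in[0,p_0)$, $$\lim_{n\to\infty}\mathbf P_p\left(\xi^1_{\lceil (C_0(p)+1)\log n\rceil}\neq\emptyset\right)=0,\qquad\text{where } C_0(p)=\frac{2}{\log(2/(1+p))}.$$
   Context: Fix an integer $r\ge3$. Let $V_n=\{1,\dots,n\}$ with $rn$ even. Let $\mathbb P$ be the law of the random multigraph $G_n$ on $V_n$ obtained by giving each vertex $r$ half-edges and pairing all $rn$ half-edges uniformly at random, and $\tilde{\mathbb P}=\mathbb P(\cdot\mid G_n\text{ is simple})$, with expectation $\tilde{\mathbb E}$. Given $G_n$ and $p\in[0,1]$, the threshold-two contact process $(\xi_t)_{t\ge0}$, $\xi_t\subseteq V_n$, is the discrete-time Markov chain in which, given $\xi_t$, independently for each vertex $x$: $x\in\xi_{t+1}$ with probability $p$ if $x$ has at least two neighbors in $\xi_t$, and $x\notin\xi_{t+1}$ otherwise. Its law given $G_n$ is $P_{G_n,p}$, and $\mathbf P_p=\tilde{\mathbb E}\,P_{G_n,p}$. $\xi^1_t$ denotes the process started from $\xi_0=V_n$. *)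

(* Defs.v *)
From HB Require Import structures.
From mathcomp Require Import all_boot all_order all_algebra.
From mathcomp Require Import all_classical all_reals.
From mathcomp Require Import reals_stdlib.Rstruct.
From mathcomp Require Import exp.
Set Implicit Arguments. Unset Strict Implicit. Unset Printing Implicit Defensive.
Import Order.TTheory GRing.Theory Num.Theory.
Local Open Scope ring_scope.

Notation R := Rdefinitions.R.

(* half-edges: vertex x in 'I_n carries r half-edges (x, i), i : 'I_r *)
Definition halfedge (n r : nat) := ('I_n * 'I_r)%type.

(* a pairing (perfect matching) of the half-edges, encoded as a
   fixed-point-free involution *)
Definition is_pairing (n r : nat) (f : {ffun halfedge n r -> halfedge n r}) : bool :=
  [forall h, (f (f h) == h) && (f h != h)].

Definition pairing_simple (n r : nat) (f : {ffun halfedge n r -> halfedge n r}) : bool :=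
  [forall h, (f h).1 != h.1] &&
  [forall h, forall h', ((h != h') && (h.1 == h'.1)) ==> ((f h).1 != (f h').1)].

Definition adj (n r : nat) (f : {ffun halfedge n r -> halfedge n r}) (x y : 'I_n) : bool :=
  [exists h : halfedge n r, (h.1 == x) && ((f h).1 == y)].

(* the set of pairings giving a simple graph (support of tilde P) *)
Definition simple_pairings (n r : nat) : {set {ffun halfedge n r -> halfedge n r}} :=
  [set f | is_pairing f && pairing_simple f].

Definition two_nbrs (n r : nat) (f : {ffun halfedge n r -> halfedge n r})
  (A : {set 'I_n}) (x : 'I_n) : bool :=
  (1 < #|[set y | adj f x y && (y \in A)]|)%N.

Definition trans (n r : nat) (f : {ffun halfedge n r -> halfedge n r}) (p : R)
  (A B : {set 'I_n}) : R :=
  \prod_(x : 'I_n)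
    (if two_nbrs f A x then (if x \in B then p else 1 - p)
     else (if x \in B then 0 else 1)).

(* law of xi_t started from xi_0 = V_n, under P_{G_n,p} *)
Fixpoint law (n r : nat) (f : {ffun halfedge n r -> halfedge n r}) (p : R) (t : nat)
  : {set 'I_n} -> R :=
  match t with
  | 0%N => fun B => if B == [set: 'I_n] then 1 else 0
  | t'.+1 => fun B => \sum_(A : {set 'I_n}) law f p t' A * trans f p A B
  end.

(* P_{G_n,p}(xi^1_t <> empty) *)
Definition survive (n r : nat) (f : {ffun halfedge n r -> halfedge n r}) (p : R) (t : nat) : R :=
  \sum_(B : {set 'I_n} | B != finset.set0) law f p t B.

(* annealed probability  \mathbf P_p(xi^1_t <> empty) = tilde E P_{G_n,p}(...) *)
Definition annealed_survive (n r : nat) (p : R) (t : nat) : R :=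
  (#|simple_pairings n r|%:R)^-1 * \sum_(f in simple_pairings n r) survive f p t.

Definition C0 (p : R) : R := 2 / ln (2 / (1 + p)).

Definition Tn (p : R) (n : nat) : nat := `|Num.ceil ((C0 p + 1) * ln (n%:R))|%N.

(* Main.v *)
Require Import Defs.
From HB Require Import structures.
From mathcomp Require Import all_boot all_order all_algebra.
From mathcomp Require Import all_classical all_reals.
From mathcomp Require Import reals_stdlib.Rstruct.
From mathcomp Require Import exp.
From mathcomp Require Import sequences ring lra.
Import Order.TTheory GRing.Theory Num.Theory.
Local Open Scope ring_scope.

Lemma sum_set_prod (n : nat) (c : 'I_n -> bool -> R) :
  \sum_(B : {set 'I_n}) \prod_(x : 'I_n) c x (x \in B) =
  \prod_(x : 'I_n) (c x true + c x false).
Proof.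
have -> : \prod_(x : 'I_n) (c x true + c x false) = \prod_(x : 'I_n) \sum_(b : bool) c x b.
  by apply: eq_bigr => x _; rewrite big_bool.
rewrite bigA_distr_bigA /=.
rewrite (reindex (fun B : {set 'I_n} => [ffun x => x \in B])) /=.
  by apply: eq_bigr => B _; apply: eq_bigr => x _; rewrite ffunE.
exists (fun g : {ffun 'I_n -> bool} => [set x | g x]) => [B _|g _].
  by apply/setP => x; rewrite inE ffunE.
by apply/ffunP => x; rewrite ffunE inE.
Qed.

Lemma card_sumR (T : finType) (S : {set T}) : (#|S|%:R : R) = \sum_y (y \in S)%:R.
Proof.
rewrite -sum1_card natr_sum big_mkcond /=; apply: eq_bigr => y _.
by case: (y \in S).
Qed.

Section G.
Variables (n r : nat) (f : {ffun halfedge n r -> halfedge n r}) (p : R).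
Hypothesis (p0 : 0 <= p) (p1 : p <= 1).

Lemma trans_ge0 A B : 0 <= trans f p A B.
Proof.
apply: prodr_ge0 => x _.
case: (two_nbrs f A x); case: (x \in B) => //=; rewrite ?subr_ge0 //.
Qed.
Lemma dummy : True. Proof. by [].
Qed.

Lemma law_ge0 t B : 0 <= law f p t B.
Proof.
elim: t B => [|t IH] B /=; first by case: (B == _).
by apply: sumr_ge0 => A _; apply: mulr_ge0 => //; apply: trans_ge0.
Qed.

Lemma marg A x :
  \sum_(B : {set 'I_n}) trans f p A B * (x \in B)%:R =
  if two_nbrs f A x then p else 0.
Proof.
pose c (y : 'I_n) (b : bool) : R :=
  if two_nbrs f A y then (if b then p else 1 - p) else (if b then 0 else 1).
pose c' (y : 'I_n) (b : bool) : R :=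
  if y == x then (if b then c y b else 0) else c y b.
have E : forall B, trans f p A B * (x \in B)%:R = \prod_y c' y (y \in B).
  move=> B; rewrite /trans (bigD1 x) //= [RHS](bigD1 x) //= /c' eqxx.
  have -> : \prod_(y | y != x) c' y (y \in B) = \prod_(y | y != x) c y (y \in B).
    by apply: eq_bigr => y /negPf; rewrite /c' => ->.
  rewrite /c; case: (x \in B) => /=; rewrite ?mulr1 ?mulr0 ?mul0r //.
under eq_bigr => B _ do rewrite E.
rewrite sum_set_prod (bigD1 x) //= big1 ?mulr1.
  by rewrite /c' /c eqxx addr0; case: (two_nbrs f A x).
move=> y /negPf yx; rewrite /c' yx /c; case: (two_nbrs f A y) => //; lra.
Qed.

Lemma adj_card x : (#|[set y | adj f x y]| <= r)%N.
Proof.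
apply: (@leq_trans #|[set (f (x, i)).1 | i in 'I_r]|).
  apply: subset_leq_card; apply/fintype.subsetP => y; rewrite inE => /existsP [[x' i]].
  move=> /andP [/= /eqP -> /eqP <-]; apply/imsetP; by exists i.
by apply: leq_trans (leq_imset_card _ _) _; rewrite card_ord.
Qed.

Definition P t x := \sum_(B : {set 'I_n}) law f p t B * (x \in B)%:R.

Lemma P_bound t x : P t x <= (r%:R * p) ^+ t.
Proof.
elim: t x => [|t IH] x.
  rewrite /P /= (bigD1 [set: 'I_n]) //= big1 ?eqxx ?inE ?mulr1 ?addr0 //.
  by move=> B /negPf ->; rewrite mul0r.
rewrite /P /=.
have -> : \sum_(B : {set 'I_n}) (\sum_A law f p t A * trans f p A B) * (x \in B)%:R
   = \sum_A law f p t A * (if two_nbrs f A x then p else 0).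
  under eq_bigr => B _ do rewrite mulr_suml.
  rewrite exchange_big /=; apply: eq_bigr => A _.
  by rewrite -marg mulr_sumr; apply: eq_bigr => B _; rewrite mulrA.
apply: le_trans (_ : \sum_A law f p t A * (p * \sum_y (adj f x y)%:R * (y \in A)%:R) <= _).
  apply: ler_sum => A _; apply: ler_wpM2l; first exact: law_ge0.
  case H: (two_nbrs f A x); last first.
    by apply: mulr_ge0 => //; apply: sumr_ge0 => y _; apply: mulr_ge0.
  rewrite -[X in X <= _]mulr1; apply: ler_wpM2l => //.
  have -> : \sum_y (adj f x y)%:R * (y \in A)%:R = #|[set y | adj f x y && (y \in A)]|%:R :> R.
    rewrite card_sumR; apply: eq_bigr => y _; rewrite inE.
    by case: (adj f x y); case: (y \in A); rewrite ?mulr1 ?mulr0.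
  by move: H; rewrite /two_nbrs => H; rewrite ler1n ltnW.
have -> : \sum_A law f p t A * (p * \sum_y (adj f x y)%:R * (y \in A)%:R)
   = p * \sum_y (adj f x y)%:R * P t y.
  under eq_bigr => A _ do rewrite mulr_sumr mulr_sumr.
  rewrite exchange_big mulr_sumr /=; apply: eq_bigr => y _.
  rewrite /P !mulr_sumr; apply: eq_bigr => A _.
  by rewrite !mulrA [law f p t A * p]mulrC -!mulrA [X in p * X]mulrCA.
rewrite exprS -[X in _ <= X]mulrA [X in _ <= X]mulrCA; apply: ler_wpM2l => //.
apply: le_trans (_ : \sum_y (adj f x y)%:R * (r%:R * p) ^+ t <= _).
  by apply: ler_sum => y _; apply: ler_wpM2l => //.
rewrite -mulr_suml; apply: ler_wpM2r.
  by apply: exprn_ge0; apply: mulr_ge0.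
have -> : \sum_y (adj f x y)%:R = #|[set y | adj f x y]|%:R :> R.
  by rewrite card_sumR; apply: eq_bigr => y _; rewrite inE.
by rewrite ler_nat adj_card.
Qed.

Lemma survive_bound t : survive f p t <= n%:R * (r%:R * p) ^+ t.
Proof.
apply: le_trans (_ : \sum_(B : {set 'I_n}) law f p t B * #|B|%:R <= _).
  rewrite /survive big_mkcond /=; apply: ler_sum => B _.
  case: ifP => HB.
    by apply: ler_peMr; [exact: law_ge0 | rewrite ler1n card_gt0].
  by apply: mulr_ge0; [exact: law_ge0 | ].
under eq_bigr => B _ do rewrite card_sumR mulr_sumr.
rewrite exchange_big /=.
apply: le_trans (_ : \sum_(x : 'I_n) (r%:R * p) ^+ t <= _).
  by apply: ler_sum => x _; apply: P_bound.
by rewrite big_const_ord iter_addr addr0 [X in _ <= X]mulr_natl.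
Qed.

Lemma survive_ge0 t : 0 <= survive f p t.
Proof. by apply: sumr_ge0 => B _; apply: law_ge0. Qed.

End G.

Lemma annealed_bound n r (p : R) t : 0 <= p -> p <= 1 ->
  0 <= annealed_survive n r p t <= n%:R * (r%:R * p) ^+ t.
Proof.
move=> p0 p1; rewrite /annealed_survive.
have b0 : 0 <= n%:R * (r%:R * p) ^+ t by apply: mulr_ge0 => //; apply: exprn_ge0; apply: mulr_ge0.
apply/andP; split.
  apply: mulr_ge0; first by rewrite invr_ge0.
  by apply: sumr_ge0 => g _; apply: survive_ge0.
case: (posnP #|simple_pairings n r|) => [->|Hc]; first by rewrite invr0 mul0r.
apply: le_trans (_ : (#|simple_pairings n r|%:R)^-1 * (n%:R * (r%:R * p) ^+ t *+ #|simple_pairings n r|) <= _).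
  apply: ler_wpM2l; first by rewrite invr_ge0.
  by rewrite -sumr_const; apply: ler_sum => g _; apply: survive_bound.
set b := n%:R * _. by rewrite -(mulr_natl b) mulrA mulVf ?mul1r // pnatr_eq0 -lt0n.
Qed.

Theorem corollary1 (r : nat) (hr : (3 <= r)%N) :
  exists p0 : R, 0 < p0 /\ p0 < 2 / 3 /\
    forall p : R, 0 <= p -> p < p0 ->
      forall eps : R, 0 < eps ->
        exists N : nat, forall n : nat, (N <= n)%N -> ~~ odd (r * n) ->
          `|annealed_survive n r p (Tn p n)| < eps.
Proof.
set e : R := expR 1.
have e1 : 1 <= e by apply: ltW; apply: pexpR_gt1.
set X : R := r%:R * (e * e).
have X3 : 3 <= X.
  have r3 : (3 : R) <= r%:R by rewrite (ler_nat R 3 r).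
  rewrite /X -[3 : R]mulr1; apply: ler_pM => //.
  by rewrite -[1 : R]mulr1; apply: ler_pM.
have X0 : 0 < X by apply: lt_le_trans X3.
have XV : X^-1 * X = 1 by rewrite mulVf // gt_eqF.
exists X^-1; split; first by rewrite invr_gt0.
have XV0 : 0 < X^-1 by rewrite invr_gt0.
split; first by nra.
move=> p p0 pX eps eps0.
have p1 : p <= 1 by nra.
set q : R := r%:R * p.
have q0 : 0 <= q by apply: mulr_ge0.
have hq : e * e * q <= 1.
  have -> : e * e * q = p * X by rewrite /q /X; ring.
  nra.
exists (`|Num.ceil (eps^-1)|%N).+1 => n Hn _.
have n1 : (1 <= n)%N by apply: leq_trans Hn.
set m : R := n%:R.
have m1 : 1 <= m by rewrite /m (ler_nat R 1 n).
have m0 : 0 < m by apply: lt_le_trans m1.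
have meps : eps^-1 < m.
  apply: le_lt_trans (ceil_ge _) _.
  apply: le_lt_trans (_ : `|Num.ceil eps^-1|%:~R < _).
    by rewrite ler_int ler_norm.
  by rewrite -natr_absz /m ltr_nat.
have mV : m^-1 < eps.
  by rewrite -[eps]invrK ltf_pV2 ?posrE ?invr_gt0.
have /andP [a0 a1] := annealed_bound n r p (Tn p n) p0 p1.
rewrite ger0_norm //; apply: le_lt_trans a1 _; apply: le_lt_trans mV.
rewrite -/m -/q.
set T := Tn p n.
have lnm0 : 0 <= ln m by apply: ln_ge0.
have C00 : 0 <= C0 p.
  rewrite /C0; apply: divr_ge0 => //; apply: ln_ge0.
  by rewrite ler_pdivlMr ?mul1r; lra.
have lnT : ln m <= T%:R.
  set z := (C0 p + 1) * ln m.
  have zl : ln m <= z by rewrite /z -[X in X <= _]mul1r; apply: ler_wpM2r => //; lra.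
  apply: le_trans zl _; apply: le_trans (ceil_ge z) _.
  by rewrite /T /Tn -/m -/z natr_absz ler_int ler_norm.
have meT : m <= e ^+ T.
  rewrite -[m]lnK ?posrE // /e -expRM_natr mul1r ler_expR //.
have H : m * m * q ^+ T <= 1.
  apply: le_trans (_ : e ^+ T * e ^+ T * q ^+ T <= _).
    apply: ler_wpM2r; first by apply: exprn_ge0.
    by apply: ler_pM => //; apply: ltW.
  by rewrite -!exprMn; apply: exprn_ile1 => //; apply: mulr_ge0 => //; apply: mulr_ge0; apply: le_trans e1.
have -> : m * q ^+ T = m^-1 * (m * m * q ^+ T).
  by rewrite -mulrA mulKf // gt_eqF.
by rewrite -[X in _ <= X]mulr1; apply: ler_wpM2l => //; rewrite invr_ge0 ltW.
Qed.
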